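(* Let $\phi(\zeta,t)=-q_t+d_t\zeta+\int_0^\infty(e^{-\zeta x}-1)\pi_t(\mathrm dx)$ for $\zeta\in\mathbb H$ and a.e. $t\ge0$, where $q_t\ge0$, $d_t\in\mathbb R$, $\pi_t$ are nonnegative Borel measures on $(0,\infty)$, $t\mapsto q_t$ and $t\mapsto d_t$ are in $L^1_{\rm loc}$, and $\min\{x,1\}\pi_t(\mathrm dx)$ is locally integrable in $t$. Let $(v_{s,t})$ be the absolutely continuous reverse evolution family (contained in $\mathcal{BF}$) with Herglotz vector field $\phi$, and let $(Z_t)$ be the associated branching process. Then $\mathbb P^{(s,x)}[T_0^s<\infty]=0$ for every $x>0$ and $s\ge0$.
   Context: $\mathbb H=\{\operatorname{Re}\zeta>0\}$, $\Delta=\{(s,t):0\le s\le t\}$; $L^1_{\rm loc}$: integrable on compact subintervals of $[0,\infty)$. A family of nonnegative measures $(\rho_t)$ is locally integrable in $t$ if $t\mapsto\rho_t(B)$ is measurable for all Borel $B$ and $t\mapsto\rho_t(\text{total})$ is in $L^1_{\rm loc}$. $\mathcal{BF}$: Bernstein functions not identically zero, extended to $\mathbb H$. The absolutely continuous reverse evolution family $(v_{s,t})$ with Herglotz vector field $\phi$ is defined by: $s\mapsto v_{s,t}(\zeta)$ is the unique solution of $\frac{\mathrm d}{\mathrm ds}v(s)=\phi(v(s),s)$ a.e. on $[0,t]$, $v(t)=\zeta$. The associated branching process $(Z_t)$ on $[0,\infty]$ is a Markov family with probabilities $\mathbb P^{(s,x)}$ whose transition kernels $k_{s,t}$ (with $k_{s,t}(0,\cdot)=\delta_0$,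 $k_{s,t}(\infty,\cdot)=\delta_\infty$) satisfy $\int_{[0,\infty)}e^{-\theta y}k_{s,t}(x,\mathrm dy)=e^{-xv_{s,t}(\theta)}$, realized with sample paths in $D[0,\infty)$ (càdlàg paths into $[0,\infty]$ absorbed at $0$ and at $\infty$ once they or their left limits reach these points). $T_0^s=\inf\{t\ge s:Z_t=0\}$. *)

(* Defs.v *)
From HB Require Import structures.
From mathcomp Require Import all_boot all_order all_algebra.
From mathcomp Require Import all_classical all_reals all_analysis.
From mathcomp Require Import measurable_realfun.
Set Implicit Arguments. Unset Strict Implicit. Unset Printing Implicit Defensive.
Import Order.TTheory GRing.Theory Num.Theory.
Import numFieldNormedType.Exports.
Local Open Scope classical_set_scope.
Local Open Scope ring_scope.

Definition herglotz_phi (R : realType) (q d : R -> R)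
  (pi : R -> {measure set R -> \bar R}) (z t : R) : R :=
  - q t + d t * z +
  fine (\int[pi t]_(y in `](0%R : R), +oo[) ((expR (- (z * y)) - 1)%:E))%E.

Definition herglotz_data (R : realType) (q d : R -> R)
  (pi : R -> {measure set R -> \bar R}) : Prop :=
  (forall t, 0 <= t -> 0 <= q t) /\
  (forall T, 0 < T -> (@lebesgue_measure R).-integrable `[0, T] (EFin \o q)) /\
  (forall T, 0 < T -> (@lebesgue_measure R).-integrable `[0, T] (EFin \o d)) /\
  (* t |-> pi_t(B) measurable, hence also t |-> (min{x,1} pi_t)(B) *)
  (forall B : set R, measurable B ->
     measurable_fun (`[0, +oo[ : set R) (fun t : R => pi t B)) /\
  (forall T, 0 < T -> (@lebesgue_measure R).-integrable `[0, T]
      (fun t => \int[pi t]_(y in `](0%R : R), +oo[) (Num.min y 1)%:E)%E).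

(* v is the (restriction to the real half-line (0,oo) of the) absolutely
   continuous reverse evolution family with Herglotz vector field phi:
   for 0 <= t and theta > 0, s |-> v s t theta solves
   d/ds v(s) = phi(v(s), s) a.e. on [0,t], v(t) = theta,
   written as the equivalent Caratheodory integral equation. *)
Definition reverse_evolution_family (R : realType) (phi : R -> R -> R)
  (v : R -> R -> R -> R) : Prop :=
  forall t theta, 0 <= t -> 0 < theta ->
    (forall s, 0 <= s <= t -> 0 < v s t theta) /\
    (@lebesgue_measure R).-integrable `[0, t]
       (fun r => (phi (v r t theta) r)%:E) /\
    (forall s, 0 <= s <= t ->
       v s t theta = theta - \int[@lebesgue_measure R]_(r in `[s, t]) phi (v r t theta) r).

(* A path w : [0,oo) -> [0,oo] in D[0,oo): cadlag, absorbed at 0 and at +oo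
   once it or its left limit reaches these points. *)
Definition left_lim (R : realType) (w : R -> \bar R) (t : R) : \bar R :=
  lim (w u @[u --> t^'-]).

Definition D_path (R : realType) (w : R -> \bar R) : Prop :=
  (forall t, 0 <= t -> (0 <= w t)%E) /\
  (forall t, 0 <= t -> w u @[u --> t^'+] --> w t) /\
  (forall t, 0 < t -> cvg (w u @[u --> t^'-])) /\
  (forall t, 0 <= t -> (w t = 0%E \/ (0 < t /\ left_lim w t = 0%E)) ->
     forall u, t <= u -> w u = 0%E) /\
  (forall t, 0 <= t -> (w t = +oo%E \/ (0 < t /\ left_lim w t = +oo%E)) ->
     forall u, t <= u -> w u = +oo%E).

Definition T0 (R : realType) (w : R -> \bar R) (s : R) : \bar R :=
  ereal_inf [set t%:E | t in [set t | s <= t /\ w t = 0%E]].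

(* Z with probabilities P (s, x) is the branching process associated with v:
   sample paths in D[0,oo), Z_t measurable, and the transition kernel
   k_{s,t}(x, .) = law of Z_t under P^{(s,x)} satisfies
   int_[0,oo) e^{-theta y} k_{s,t}(x,dy) = e^{-x v_{s,t}(theta)};
   k_{s,t}(0,.) = delta_0, k_{s,t}(oo,.) = delta_oo. *)
Definition branching_process (R : realType) (d : measure_display)
  (Omega : measurableType d) (v : R -> R -> R -> R)
  (P : R -> \bar R -> probability Omega R) (Z : R -> Omega -> \bar R) : Prop :=
  (forall w, D_path (fun t => Z t w)) /\
  (forall t, 0 <= t -> measurable_fun setT (Z t)) /\
  (forall s t (x : R) theta, 0 <= s <= t -> 0 <= x -> 0 < theta ->
     (\int[P s x%:E]_(w in [set w | (Z t w < +oo)%E])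
        (expR (- (theta * fine (Z t w))))%:E)%E
     = (expR (- (x * v s t theta)))%:E) /\
  (forall s t, 0 <= s <= t -> P s 0%E [set w | Z t w = 0%E] = 1%E) /\
  (forall s t, 0 <= s <= t -> P s +oo%E [set w | Z t w = +oo%E] = 1%E).

(* Main.v *)
Require Import Defs.
From HB Require Import structures.
From mathcomp Require Import all_boot all_order all_algebra.
From mathcomp Require Import all_classical all_reals all_analysis.
From mathcomp Require Import measurable_realfun.
From mathcomp Require Import ring lra.
Import Order.TTheory GRing.Theory Num.Theory.
Import numFieldNormedType.Exports.
Local Open Scope classical_set_scope.
Local Open Scope ring_scope.
Local Notation mu := (@lebesgue_measure _).

Lemma itv_sub (R : realType) (a b r c : R) : a <= r -> c <= b ->
  `[r, c] `<=` `[a, b].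
Proof.
move=> ar cb; apply: subset_itv; rewrite bnd_simp //.
Qed.

Lemma Rint_split (R : realType) (g : R -> R) (r c t : R) :
  mu.-integrable `[r, t] (EFin \o g) -> r <= c -> c <= t ->
  \int[mu]_(x in `[r, t]) g x =
  \int[mu]_(x in `[r, c]) g x + \int[mu]_(x in `[c, t]) g x.
Proof.
move=> ig rc ct.
have := @Rintegral_itvB R g (BLeft r) (BRight t) c ig.
rewrite !bnd_simp => /(_ rc ct) H.
rewrite -(@Rintegral_itv_obnd_cbnd R c (BRight t) g); last first.
  apply: integrableS ig => //; apply: subset_itv; rewrite bnd_simp //.
rewrite -H; lra.
Qed.

Arguments Rint_split {R g r c t}.

Lemma integrable_normr (R : realType) (D : set R) (g : R -> R) :
  measurable D -> mu.-integrable D (EFin \o g) ->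
  mu.-integrable D (EFin \o (fun x => `|g x|)).
Proof.
move=> mD ig; have := integrable_abse ig.
have := @eq_integrable _ _ _ mu D mD (abse \o (EFin \o g)) (EFin \o (fun x => `|g x|)).
by move=> H; apply: H => //; move=> x _.
Qed.
Arguments integrable_normr {R D g}.

Lemma piece (R : realType) (t th dl : R) (f V k : R -> R) :
  mu.-integrable `[0, t] (EFin \o f) ->
  mu.-integrable `[0, t] (EFin \o k) ->
  (forall r, 0 <= r -> r <= t -> V r = th - \int[mu]_(x in `[r, t]) f x) ->
  (forall r, 0 <= r -> r <= t -> 0 < V r) ->
  (forall r, 0 <= r -> r <= t -> 0 <= k r) ->
  (forall r, 0 <= r -> r <= t -> f r <= k r * V r) ->
  (forall r c, 0 <= r -> r <= c -> c <= t -> c - r <= dl ->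
     \int[mu]_(x in `[r, c]) k x <= 1/2) ->
  forall r b, 0 <= r -> r <= b -> b <= t -> b - r <= dl -> V b / 2 <= V r.
Proof.
move=> intf intk HV Vpos k0 fk kint r b r0 rb bt bdl.
have sub : forall a c, 0 <= a -> c <= t -> `[a, c] `<=` `[0, t].
  by move=> a c a0 ct; apply: itv_sub.
have intfs : forall a c, 0 <= a -> c <= t -> (@lebesgue_measure R).-integrable `[a, c] (EFin \o f).
  by move=> a c a0 ct; apply: integrableS intf => //; apply: sub.
have Vsplit : forall a c, 0 <= a -> a <= c -> c <= t ->
    V a = V c - \int[mu]_(x in `[a, c]) f x.
  move=> a c a0 ac ct.
  have a_t : a <= t by exact: le_trans ct.
  have c0 : 0 <= c by exact: le_trans ac.
  rewrite (HV a a0 a_t) (HV c c0 ct) (Rint_split (intfs a t a0 (lexx t)) ac ct).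
  lra.
have Vle : forall a, 0 <= a -> a <= t -> V a <= th + \int[mu]_(x in `[0, t]) `|f x|.
  move=> a a0 at_; rewrite HV //.
  have iaf := integrable_normr (measurable_itv _) intf.
  rewrite (Rint_split iaf a0 at_).
  have h1 : `|\int[mu]_(x in `[a, t]) f x| <= \int[mu]_(x in `[a, t]) `|f x|.
    by apply: le_normr_Rintegral => //; exact: intfs.
  have h2 : 0 <= \int[mu]_(x in `[0, a]) `|f x| by apply: Rintegral_ge0.
  have h3 := ler_norm (\int[mu]_(x in `[a, t]) f x).
  have h4 : - `|\int[mu]_(x in `[a, t]) f x| <= \int[mu]_(x in `[a, t]) f x.
    by rewrite lerNl -normrN ler_norm.
  move: h1 h2 h4.
  move: (\int[mu]_(x in `[a, t]) f x) (\int[mu]_(x in `[a, t]) `|f x|) (\int[mu]_(x in `[0, a]) `|f x|) => u1 u2 u3.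
  move: `|u1| => u4.
  lra.
set B := th + \int[mu]_(x in `[0, t]) `|f x|.
set E := [set V a | a in `[r, b]].
have hsE : has_sup E.
  split; first by exists (V b), b => //=; rewrite in_itv/= rb lexx.
  exists B => y [a] /=; rewrite in_itv/= => /andP[ra ab] <-.
  by apply: Vle; [exact: le_trans ra|exact: le_trans bt].
have supub := sup_upper_bound hsE.
have VbS : V b <= sup E by apply: supub; exists b => //=; rewrite in_itv/= rb lexx.
have S0 : 0 <= sup E by apply: le_trans VbS; apply/ltW/Vpos => //; exact: le_trans rb.
suff : sup E / 2 <= V r by apply: le_trans; rewrite ler_pM2r.
apply/ler_addgt0Pr => e e0.
have [y [c /=]] := sup_adherent e0 hsE.
rewrite in_itv/= => /andP[rc cb] <- Sc.
have c0 : 0 <= c by exact: le_trans rc.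
have ct : c <= t by exact: le_trans bt.
rewrite (Vsplit r c r0 rc ct).
have ikS : mu.-integrable `[r, c] (EFin \o (fun x => sup E * k x)).
  have ik : mu.-integrable `[r, c] (EFin \o k).
    by apply: integrableS intk => //; apply: sub.
  have : mu.-integrable `[r, c] (fun x => ((sup E)%:E * (EFin \o k) x)%E).
    by apply: integrableZl.
  by move=> H; apply: eq_integrable H => // x _.
have H1 : \int[mu]_(x in `[r, c]) f x <= \int[mu]_(x in `[r, c]) (sup E * k x).
  apply: le_Rintegral => //; first exact: intfs.
  move=> x /=; rewrite in_itv/= => /andP[rx xc].
  have x0 : 0 <= x by exact: le_trans rx.
  have xt : x <= t by exact: le_trans ct.
  apply: (le_trans (fk x x0 xt)); rewrite mulrC ler_wpM2r ?k0//.
  by apply: supub; exists x => //=; rewrite in_itv/= rx (le_trans xc cb).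
rewrite RintegralZl // in H1; last first.
  by apply: integrableS intk => //; apply: sub.
have crd : c - r <= dl by move: cb bdl; clear; lra.
have H2 := kint r c r0 rc ct crd.
have H3 := ler_wpM2l S0 H2.
move: H1 H3 Sc S0.
move: (\int[mu]_(x in `[r, c]) f x) (\int[mu]_(x in `[r, c]) k x) (sup E) (V c) => u1 u2 u3 u4.
clear; lra.
Qed.

Arguments piece {R t th dl f V k}.

Lemma chain (R : realType) (t th dl : R) (f V k : R -> R) :
  0 <= t -> 0 < th -> 0 < dl ->
  mu.-integrable `[0, t] (EFin \o f) ->
  mu.-integrable `[0, t] (EFin \o k) ->
  (forall r, 0 <= r -> r <= t -> V r = th - \int[mu]_(x in `[r, t]) f x) ->
  (forall r, 0 <= r -> r <= t -> 0 < V r) ->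
  (forall r, 0 <= r -> r <= t -> 0 <= k r) ->
  (forall r, 0 <= r -> r <= t -> f r <= k r * V r) ->
  (forall r c, 0 <= r -> r <= c -> c <= t -> c - r <= dl ->
     \int[mu]_(x in `[r, c]) k x <= 1/2) ->
  forall n r, 0 <= r -> r <= t -> t - r <= n%:R * dl -> th / 2 ^+ n <= V r.
Proof.
move=> t0 th0 dl0 intf intk HV Vpos k0 fk kint.
have Vt : V t = th by rewrite HV // set_itv1 Rintegral_set1 subr0.
elim=> [|n IH] r r0 rt.
  rewrite mul0r expr0 divr1 => h.
  have -> : r = t by apply/eqP; rewrite eq_le rt /=; move: h; clear; lra.
  by rewrite Vt.
move=> h.
have [b [rb bt bdl tb]] : exists b, [/\ r <= b, b <= t, b - r <= dl & t - b <= n%:R * dl].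
  have n0 : 0 <= n%:R * dl :> R by rewrite mulr_ge0 // ltW.
  move: h; rewrite -natr1 mulrDl mul1r => h.
  have [rdt|rdt] := leP (r + dl) t.
    by exists (r + dl); split => //; move: dl0 h; clear; lra.
  by exists t; split => //; move: rdt n0 dl0; clear; lra.
have b0 : 0 <= b by exact: le_trans rb.
have := IH b b0 bt tb.
have := piece intf intk HV Vpos k0 fk kint r b r0 rb bt bdl.
rewrite exprS.
have p0 : 0 < (2 ^+ n : R) by apply: exprn_gt0.
move: (V b) (V r) (2 ^+ n : R) p0 => u1 u2 u3 u30 h1 h2.
rewrite invfM mulrA.
by rewrite mulrAC; apply: le_trans h1; rewrite ler_pM2r.
Qed.

Lemma abs_cont (R : realType) (t : R) (g : R -> R) :
  mu.-integrable `[0, t] (EFin \o g) ->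
  exists dl : R, 0 < dl /\ forall r c, 0 <= r -> r <= c -> c <= t -> c - r <= dl ->
     \int[mu]_(x in `[r, c]) `|g x| <= 1/2.
Proof.
move=> ig.
have ig' : mu.-integrable setT (EFin \o (g \_ `[0, t])).
  rewrite -restrict_EFin; apply/integrable_restrict => //=; rewrite setTI //.
have h2 : (0 : R) < 1/2 by lra.
have [e [e0 He]] := integral_normr_continuous ig' h2.
exists (e / 2); split; first by rewrite divr_gt0.
move=> r c r0 rc ct crd.
have -> : \int[mu]_(x in `[r, c]) `|g x| = \int[mu]_(x in `[r, c]) `|(g \_ `[0, t]) x|.
  apply: eq_Rintegral => x; rewrite inE/= in_itv/= => /andP[rx xc].
  rewrite patchE ifT // inE/= in_itv/=.
  by rewrite (le_trans r0 rx) (le_trans xc ct).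
apply/ltW/He => //.
rewrite [X in (X < _)%E](lebesgue_measure_itv `[r, c])/=.
case: ifP => _; last by rewrite lte_fin.
rewrite -EFinD lte_fin; move: crd e0; clear; lra.
Qed.
Arguments abs_cont {R t g}.

Lemma phi_le (R : realType) (q d : R -> R) (pi : R -> {measure set R -> \bar R}) z r :
  herglotz_data q d pi -> 0 <= r -> 0 < z ->
  herglotz_phi q d pi z r <= `|d r| * z.
Proof.
move=> [q0 _] r0 z0; rewrite /herglotz_phi.
have fle0 : forall y, 0 < y -> (expR (- (z * y)) - 1) <= 0.
  move=> y y0.
  by rewrite subr_le0 expR_le1 oppr_le0 mulr_ge0// ltW.
have H1 : (\int[pi r]_(y in `](0%R : R), +oo[) ((expR (- (z * y)) - 1)%:E) <= 0)%E.
  rewrite -[X in (_ <= X)%E]oppe0 leeNr -integralN /=.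
    apply: integral_ge0 => y /= yD.
    by rewrite lee_fin oppr_ge0 fle0//; move: yD; rewrite in_itv/= andbT.
  apply: fin_num_adde_defr.
  rewrite [X in X \in _](_ : _ = 0%E) //.
  rewrite -(integral0 (pi r) `](0%R : R), +oo[).
  apply: eq_integral => y yD /=.
  rewrite funeposE; apply/max_idPr; rewrite lee_fin; apply: fle0.
  by move: yD; rewrite inE/= in_itv/= andbT.
have H2 := fine_le0 H1.
have := q0 r r0; have := ler_wpM2r (ltW z0) (ler_norm (d r)).
lra.
Qed.
Lemma zero_le_exp (R : realType) (dO : measure_display) (Omega : measurableType dO)
  (v : R -> R -> R -> R)
  (P : R -> \bar R -> probability Omega R) (Z : R -> Omega -> \bar R) :
  branching_process v P Z ->
  forall s t x th, 0 <= s -> s <= t -> 0 <= x -> 0 < th ->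
  (P s x%:E [set w | Z t w = 0%E] <= (expR (- (x * v s t th)))%:E)%E.
Proof.
move=> [_ [mZ [lap _]]] s t x th s0 st x0 th0.
have t0 : 0 <= t by exact: le_trans st.
have mZt := mZ t t0.
have mA0 : measurable [set w | Z t w = 0%E].
  by have := mZt measurableT [set 0%E] (emeasurable_set1 _); rewrite setTI.
have mA : measurable [set w | (Z t w < +oo)%E].
  have := mZt measurableT [set +oo%E] (emeasurable_set1 _); rewrite setTI => h.
  have -> : [set w | (Z t w < +oo)%E] = ~` (Z t @^-1` [set +oo%E]).
    by apply/seteqP; split => w /=; rewrite ltey => /eqP.
  exact: measurableC.
rewrite -(lap s t x th) ?st ?s0 //.
have mg : measurable_fun [set w | (Z t w < +oo)%E]
    (fun w => (expR (- (th * fine (Z t w))))%:E).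
  have -> : (fun w => (expR (- (th * fine (Z t w))))%:E) =
      EFin \o (expR \o (( *%R^~ (- th)) \o (fine \o Z t))).
    by apply/funext => w /=; rewrite mulrN mulrC.
  apply/measurable_EFinP.
  apply: measurableT_comp; first exact: measurable_expR.
  apply: measurableT_comp; first exact: mulrr_measurable.
  apply: measurableT_comp; first exact: fine_measurable.
  exact: measurable_funTS.
apply: le_trans; last first.
  apply: (ge0_subset_integral _ mA0 mA mg).
  - by move=> w _; rewrite lee_fin expR_ge0.
  - by move=> w /= ->.
rewrite (eq_integral (cst 1%E)); last first.
  by move=> w; rewrite inE /= => ->; rewrite /= mulr0 oppr0 expR0.
by rewrite integral_cst // mul1e.
Qed.

Arguments zero_le_exp {R dO Omega v P Z}.

Lemma zero_null (R : realType) (q d : R -> R)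
  (pi : R -> {measure set R -> \bar R}) (v : R -> R -> R -> R)
  (dO : measure_display) (Omega : measurableType dO)
  (P : R -> \bar R -> probability Omega R) (Z : R -> Omega -> \bar R) :
  herglotz_data q d pi ->
  reverse_evolution_family (herglotz_phi q d pi) v ->
  branching_process v P Z ->
  forall s t x, 0 <= s -> s <= t -> 0 < x ->
  P s x%:E [set w | Z t w = 0%E] = 0%E.
Proof.
move=> hd hv bp s t x s0 st x0.
have t0 : 0 <= t by exact: le_trans st.
have [_ [_ [intd _]]] := hd.
have intdt : (@lebesgue_measure R).-integrable `[0, t] (EFin \o d).
  have t1 : (0 : R) < t + 1 by move: t0; clear; lra.
  have H := intd _ t1. apply: integrableS H => //.
  by apply: itv_sub => //; move: t0; clear; lra.
have [dl [dl0 Hdl]] := abs_cont intdt.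
set N := Num.Def.archi_bound ((t - s) / dl).
have HN : t - s <= N%:R * dl.
  have hts : 0 <= t - s by rewrite subr_ge0.
  have h := @archi_boundP R ((t - s) / dl) (divr_ge0 hts (ltW dl0)).
  by rewrite -ler_pdivrMr //; apply: ltW.
have key : forall th, 0 < th -> th / 2 ^+ N <= v s t th.
  move=> th th0.
  have [Vpos [intf HV]] := hv t th t0 th0.
  apply: (@chain R t th dl (fun r => herglotz_phi q d pi (v r t th) r)
     (fun r => v r t th) (fun r => `|d r|) t0 th0 dl0 intf
     (integrable_normr (measurable_itv _) intdt)) => //.
  - by move=> r r0 rt /=; apply: HV; rewrite r0.
  - by move=> r r0 rt /=; apply: Vpos; rewrite r0.
  - move=> r r0 rt /=; apply: phi_le => //.
    by apply: Vpos; rewrite r0.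
apply/eqP; rewrite eq_le measure_ge0 andbT.
apply/lee_addgt0Pr => e e0; rewrite add0e.
have p0 : 0 < (2 ^+ N : R) by apply: exprn_gt0.
set th := 2 ^+ N / (x * e).
have th0 : 0 < th by rewrite divr_gt0 // mulr_gt0.
apply: (le_trans (zero_le_exp bp s t x th s0 st (ltW x0) th0)).
rewrite lee_fin.
have h1 : 1 / e <= x * v s t th.
  have := key th th0; rewrite /th => h.
  have -> : 1 / e = x * (2 ^+ N / (x * e) / 2 ^+ N).
    by field; rewrite !gt_eqF.
  by rewrite ler_pM2l.
apply: (@le_trans _ _ (expR (- (1 / e)))).
  by rewrite ler_expR lerN2.
rewrite expRN -[e]invrK lef_pV2 ?posrE ?expR_gt0 ?invr_gt0 //.
apply: le_trans (expR_ge1Dx _).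
by rewrite invrK mul1r lerDr.
Qed.

Theorem mainTheorem15 (R : realType) (q d : R -> R)
  (pi : R -> {measure set R -> \bar R}) (v : R -> R -> R -> R)
  (dO : measure_display) (Omega : measurableType dO)
  (P : R -> \bar R -> probability Omega R) (Z : R -> Omega -> \bar R) :
  herglotz_data q d pi ->
  reverse_evolution_family (herglotz_phi q d pi) v ->
  branching_process v P Z ->
  forall (s x : R), 0 <= s -> 0 < x ->
    P s x%:E [set w | (T0 (fun t => Z t w) s < +oo)%E] = 0%E.
Proof.
move=> hd hv bp s x s0 x0.
have [paths [mZ _]] := bp.
have EU : [set w | (T0 (fun t => Z t w) s < +oo)%E] =
    \bigcup_n [set w | Z (s + n%:R) w = 0%E].
  apply/seteqP; split => w /=.
    rewrite /T0 => h.
    have [t0 [st0 zt0]] : exists t0, s <= t0 /\ Z t0 w = 0%E.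
      apply: contrapT => hn; move: h.
      rewrite (_ : [set _%:E | _ in _] = set0) ?ereal_inf0 ?ltxx //.
      apply/seteqP; split => y // [t1 [st1 zt1] _]; apply: hn; exists t1.
      by split.
    have hts : 0 <= t0 - s by rewrite subr_ge0.
    have h2 := archi_boundP hts.
    exists (Num.Def.archi_bound (t0 - s)) => //=.
    have [_ [_ [_ [abs0 _]]]] := paths w.
    apply: (abs0 t0 (le_trans s0 st0) (or_introl zt0)).
    by move: h2; clear; lra.
  move=> [n _ zn]; rewrite /T0.
  apply: (le_lt_trans _ (ltry (s + n%:R))).
  apply: ereal_inf_lbound; exists (s + n%:R) => //; split => //.
  by rewrite lerDl.
have mA : forall n : nat, measurable [set w | Z (s + n%:R) w = 0%E].
  move=> n; have hn : 0 <= s + n%:R by rewrite addr_ge0.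
  by have := mZ _ hn measurableT [set 0%E] (emeasurable_set1 _); rewrite setTI.
rewrite EU; apply: measure_negligible; first exact: bigcupT_measurable.
apply: negligible_bigcup => n; apply/negligibleP => //.
apply: (@zero_null _ _ _ _ _ _ _ _ _ hd hv bp s (s + n%:R) x) => //.
by rewrite lerDl.
Qed.
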